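(* Suppose the pair $\{E,F\}$, $E,F:\mathcal I\to\mathbb R^{m\times m}$ sufficiently smooth, is equivalent to a pair in standard canonical form $\left\{\begin{bmatrix}I_d&0\\0&N\end{bmatrix},\begin{bmatrix}\Omega&0\\0&I_a\end{bmatrix}\right\}$ with $a=m-d$, $\Omega:\mathcal I\to\mathbb R^{d\times d}$ and $N:\mathcal I\to\mathbb R^{a\times a}$ pointwise strictly upper triangular (rank of $N$ not necessarily constant). Then (1) $\operatorname{rank}\mathcal E_{[k]}(t)=\operatorname{rank}\mathcal D_{[k]}(t)=km+d$ for all $t\in\mathcal I$ and all $k\ge a-1$; (2) $\dim(\ker E(t)\cap S_{[k]}(t))=0$ for all $t\in\mathcal I$ and all $k\ge a$.
   Context: Two pairs are equivalent if $\tilde E=LEK$, $\tilde F=LFK+LEK'$ for pointwise nonsingular sufficiently smooth $L,K$. Derivative arrays: $\mathcal E_{[k]}$ is the $(k+1)m\times(k+1)m$ block lower triangular matrix function with $(i,j)$ block ($0\le j\le i\le k$) $\binom{i}{j}E^{(i-j)}+\binom{i}{j+1}F^{(i-j-1)}$ (the $F$-term absent for $j=i$), zero for $j>i$; $\mathcal F_{[k]}=[F;F';\dots;F^{(k)}]$; $\mathcal D_{[0]}=E$, $\mathcal D_{[k]}=\begin{bmatrix}E&0\\\mathcal F_{[k-1]}&\mathcal E_{[k-1]}\end{bmatrix}$ for $k\ge1$; $S_{[k]}(t)=\{z:\mathcal F_{[k]}(t)z\in\operatorname{im}\mathcal E_{[k]}(t)\}$. *)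

(* Defs.v *)
From HB Require Import structures.
From mathcomp Require Import all_boot all_order all_algebra.
From mathcomp Require Import all_classical all_reals all_analysis.
Set Implicit Arguments. Unset Strict Implicit. Unset Printing Implicit Defensive.
Import Order.TTheory GRing.Theory Num.Theory.
Local Open Scope ring_scope.
Local Open Scope classical_set_scope.

Section Defs.
Variable R : realType.

Definition mxder {p q : nat} (k : nat) (M : R -> 'M[R]_(p, q)) (t : R)
  : 'M[R]_(p, q) :=
  \matrix_(i, j) derive1n k (fun s => M s i j) t.

(* "sufficiently smooth" := every entry is infinitely differentiable on I *)
Definition smooth_on (I : set R) (f : R -> R) : Prop :=
  forall (n : nat) (t : R), I t -> derivable (derive1n n f) t 1.

Definition smooth_mx {p q : nat} (I : set R) (M : R -> 'M[R]_(p, q)) : Prop :=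
  forall i j, smooth_on I (fun s => M s i j).

Definition pair_equiv {m : nat} (I : set R) (E F Et Ft : R -> 'M[R]_m) : Prop :=
  exists L K : R -> 'M[R]_m,
    [/\ smooth_mx I L, smooth_mx I K,
        (forall t, I t -> L t \in unitmx),
        (forall t, I t -> K t \in unitmx) &
        (forall t, I t ->
           Et t = L t *m E t *m K t /\
           Ft t = L t *m F t *m K t + L t *m E t *m mxder 1 K t)].

Definition strictly_upper {n : nat} (M : 'M[R]_n) : Prop :=
  forall i j : 'I_n, (j <= i)%N -> M i j = 0.

(* n x n block lower triangular matrix with (i,j) block
   C(i,j) E^(i-j) + C(i,j+1) F^(i-j-1)  (F-term absent for j = i),
   zero for j > i.  calE m E F k.+1 t is the derivative array E_[k](t). *)
Definition calE {m : nat} (E F : R -> 'M[R]_m) (n : nat) (t : R) :=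
  \mxblock_(i < n, j < n)
    (if (j <= i)%N then
       ('C(i, j))%:R *: mxder (i - j) E t
       + (if (j < i)%N then ('C(i, j.+1))%:R *: mxder (i - j).-1 F t else 0)
     else (0 : 'M[R]_m)).

Definition calF {m : nat} (F : R -> 'M[R]_m) (n : nat) (t : R) :=
  \mxcol_(i < n) mxder i F t.

Definition Ek {m : nat} (E F : R -> 'M[R]_m) (k : nat) (t : R) := calE E F k.+1 t.
Definition Fk {m : nat} (F : R -> 'M[R]_m) (k : nat) (t : R) := calF F k.+1 t.

(* D_[k] = [E 0; F_[k-1] E_[k-1]] for k >= 1; for k = 0 the lower blocks
   are empty (0 rows / 0 columns), so D_[0] is E itself. *)
Definition Dk {m : nat} (E F : R -> 'M[R]_m) (k : nat) (t : R) :=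
  block_mx (E t) 0 (calF F k t) (calE E F k t).

Definition Sk {m : nat} (E F : R -> 'M[R]_m) (k : nat) (t : R) : set 'cV[R]_m :=
  [set z | exists w, Fk F k t *m z = Ek E F k t *m w].

End Defs.

(* Main.v *)
Require Import Defs.
From HB Require Import structures.
From mathcomp Require Import all_boot all_order all_algebra.
From mathcomp Require Import all_classical all_reals all_analysis.
From mathcomp Require Import zify.
From Stdlib Require Import FunctionalExtensionality.
Set Implicit Arguments. Unset Strict Implicit. Unset Printing Implicit Defensive.
Import Order.TTheory GRing.Theory Num.Theory.
Import numFieldNormedType.Exports.
Local Open Scope ring_scope.

Section Hurwitz.
Variable R : fieldType.

Definition hm {p q r : nat} (a : nat -> 'M[R]_(p,q)) (b : nat -> 'M[R]_(q,r)) (n : nat)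
  : 'M[R]_(p,r) := \sum_(j < n.+1) ('C(n, j))%:R *: (a j *m b (n - j)%N).
Definition sh {p q : nat} (a : nat -> 'M[R]_(p,q)) (n : nat) := a n.+1.
Definition rs {p q : nat} (a : nat -> 'M[R]_(p,q)) (n : nat) :=
  if n is n'.+1 then a n' else 0.
Definition dl {p q : nat} (z : 'M[R]_(p,q)) (n : nat) :=
  if n is 0 then z else 0.
Definition fadd {p q : nat} (a b : nat -> 'M[R]_(p,q)) n := a n + b n.

Lemma hm_sh p q r (a : nat -> 'M[R]_(p,q)) (b : nat -> 'M[R]_(q,r)) n :
  hm a b n.+1 = hm (sh a) b n + hm a (sh b) n.
Proof.
rewrite /hm big_ord_recl /= bin0 subn0.
under eq_bigr => j _ do rewrite /bump /= add1n binS subSS natrD scalerDl.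
rewrite big_split /=.
rewrite addrA addrC; congr (_ + _).
rewrite [in RHS]big_ord_recl /= bin0 subn0 /sh; congr (_ + _).
rewrite big_ord_recr /= bin_small // scale0r addr0.
apply: eq_bigr => j _; rewrite /bump /= add1n subnSK //.
Qed.

Section HLemmas.
Variable p q r s : nat.
Implicit Types (a : nat -> 'M[R]_(p,q)) (b : nat -> 'M[R]_(q,r)).

Lemma hm_ext a a' b b' n :
  (forall j, (j <= n)%N -> a j = a' j) -> (forall j, (j <= n)%N -> b j = b' j) ->
  hm a b n = hm a' b' n.
Proof.
move=> ha hb; apply: eq_bigr => j _.
by rewrite ha ?hb // ?leq_subr // -ltnS.
Qed.

Lemma hmDl a a' b n : hm (fadd a a') b n = hm a b n + hm a' b n.
Proof.
rewrite /hm -big_split /=; apply: eq_bigr => j _.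
by rewrite /fadd mulmxDl scalerDr.
Qed.

Lemma hmDr a b b' n : hm a (fadd b b') n = hm a b n + hm a b' n.
Proof.
rewrite /hm -big_split /=; apply: eq_bigr => j _.
by rewrite /fadd mulmxDr scalerDr.
Qed.

Lemma hm0n a b : hm a b 0 = a 0%N *m b 0%N.
Proof. by rewrite /hm big_ord1 /= scale1r. Qed.

Lemma sh_hm a b : sh (hm a b) = fadd (hm (sh a) b) (hm a (sh b)).
Proof. by apply: functional_extensionality => n; rewrite /sh hm_sh. Qed.

Lemma hm_dlr a (z : 'M[R]_(q,r)) n : hm a (dl z) n = a n *m z.
Proof.
rewrite /hm big_ord_recr /= subnn binn scale1r big1 ?add0r // => j _.
case: j => j hj /=; case E: (n - j)%N => [|k]; last by rewrite /dl mulmx0 scaler0.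
by move/eqP: E; rewrite subn_eq0 leqNgt hj.
Qed.

Lemma hm_dll (z : 'M[R]_(p,q)) b n : hm (dl z) b n = z *m b n.
Proof.
rewrite /hm big_ord_recl /= bin0 subn0 scale1r big1 ?addr0 // => j _.
by rewrite /= mul0mx scaler0.
Qed.

Lemma hm0r a n : hm a (fun _ => (0 : 'M[R]_(q,r))) n = 0.
Proof. by rewrite /hm big1 // => j _; rewrite mulmx0 scaler0. Qed.

Lemma hm0l b n : hm (fun _ => (0 : 'M[R]_(p,q))) b n = 0.
Proof. by rewrite /hm big1 // => j _; rewrite mul0mx scaler0. Qed.

End HLemmas.

Lemma hmA p q r s (a : nat -> 'M[R]_(p,q)) (b : nat -> 'M[R]_(q,r))
  (c : nat -> 'M[R]_(r,s)) n : hm (hm a b) c n = hm a (hm b c) n.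
Proof.
elim: n a b c => [|n IH] a b c; first by rewrite !hm0n mulmxA.
rewrite hm_sh sh_hm hmDl !IH [in RHS]hm_sh sh_hm hmDr.
by rewrite addrA.
Qed.


Lemma faddE p q (a b : nat -> 'M[R]_(p,q)) n : fadd a b n = a n + b n.
Proof. by []. Qed.

Lemma hmDr_f p q r (a : nat -> 'M[R]_(p,q)) (b b' : nat -> 'M[R]_(q,r)) :
  hm a (fadd b b') = fadd (hm a b) (hm a b').
Proof. by apply: functional_extensionality => n; rewrite hmDr. Qed.

Definition GG {m c : nat} (e f : nat -> 'M[R]_m) (x : nat -> 'M[R]_(m,c)) :=
  fadd (hm e (sh x)) (hm f x).

Lemma master m c (l e f k : nat -> 'M[R]_m) (x : nat -> 'M[R]_(m,c)) n :
  GG (hm (hm l e) k) (fadd (hm (hm l f) k) (hm (hm l e) (sh k))) x n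
  = hm l (GG e f (hm k x)) n.
Proof.
rewrite /GG {1}/fadd hmDl !hmA sh_hm hmDr_f hmDr_f.
rewrite faddE hmDr.
by rewrite (addrC (hm l (hm f _) n)) addrA (addrC (hm l (hm e (hm k (sh x))) n)).
Qed.


Lemma hm_rev p q r (a : nat -> 'M[R]_(p,q)) (b : nat -> 'M[R]_(q,r)) n :
  hm a b n = \sum_(j < n.+1) ('C(n, j))%:R *: (a (n - j)%N *m b j).
Proof.
rewrite /hm (reindex_inj rev_ord_inj) /=; apply: eq_bigr => j _.
have hj : (j <= n)%N by rewrite -ltnS.
by rewrite subSS bin_sub // subKn.
Qed.

Lemma sum_if_lt p q n b (X : nat -> 'M[R]_(p,q)) : (b <= n)%N ->
  \sum_(j < n) (if (j < b)%N then X j else 0) = \sum_(j < b) X j.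
Proof. move=> hb; rewrite (big_ord_widen n X hb). by rewrite [RHS]big_mkcond. Qed.

Definition bE {m : nat} (e f : nat -> 'M[R]_m) n :=
  \mxblock_(i < n, j < n)
    (if (j <= i)%N then
       ('C(i, j))%:R *: e (i - j)%N
       + (if (j < i)%N then ('C(i, j.+1))%:R *: f (i - j)%N.-1 else 0)
     else (0 : 'M[R]_m)).

Lemma bE_mul m c (e f : nat -> 'M[R]_m) n (w : nat -> 'M[R]_(m,c)) :
  bE e f n *m \mxcol_(j < n) w j = \mxcol_(i < n) GG e f (rs w) i.
Proof.
rewrite /bE mul_mxblock_mxrow; apply: eq_mxcol => i.
rewrite /GG faddE.
have -> : sh (rs w) = w by [].
transitivity (\sum_(j < n) (if (j < i.+1)%N then
   ('C(i, j))%:R *: (e (i - j)%N *m w j) else 0) +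
   \sum_(j < n) (if (j < i)%N then
   ('C(i, j.+1))%:R *: (f (i - j)%N.-1 *m w j) else 0)).
  rewrite -big_split /=; apply: eq_bigr => j _; rewrite ltnS.
  case: (leqP j i) => hji.
    rewrite mulmxDl -scalemxAl; congr (_ + _).
    by case: (j < i)%N; rewrite ?mul0mx // -scalemxAl.
  by rewrite mul0mx (leq_gtF (ltnW hji)) addr0.
rewrite (sum_if_lt (fun j : nat => ('C(i, j))%:R *: (e (i - j)%N *m w j))) //.
rewrite (sum_if_lt (fun j : nat => ('C(i, j.+1))%:R *: (f (i - j)%N.-1 *m w j))) ?(ltnW (ltn_ord i)) //.
rewrite hm_rev hm_rev; congr (_ + _).
rewrite big_ord_recl /= mulmx0 scaler0 add0r.
by apply: eq_bigr => j _; rewrite /bump /= add1n subnS.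
Qed.


Definition LL {m : nat} (l : nat -> 'M[R]_m) n :=
  \mxblock_(i < n, j < n)
    (if (j <= i)%N then ('C(i, j))%:R *: l (i - j)%N else (0 : 'M[R]_m)).

Definition KK {m : nat} (k : nat -> 'M[R]_m) n :=
  \mxblock_(i < n, j < n)
    (if (j <= i)%N then ('C(i.+1, j.+1))%:R *: k (i - j)%N else (0 : 'M[R]_m)).

Lemma LL_mul m c (l : nat -> 'M[R]_m) n (u : nat -> 'M[R]_(m,c)) :
  LL l n *m \mxcol_(j < n) u j = \mxcol_(i < n) hm l u i.
Proof.
rewrite /LL mul_mxblock_mxrow; apply: eq_mxcol => i.
transitivity (\sum_(j < n) (if (j < i.+1)%N then
   ('C(i, j))%:R *: (l (i - j)%N *m u j) else 0)).
  apply: eq_bigr => j _; rewrite ltnS.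
  by case: (leqP j i) => hji; rewrite ?mul0mx // -scalemxAl.
by rewrite (sum_if_lt (fun j : nat => ('C(i, j))%:R *: (l (i - j)%N *m u j))) // hm_rev.
Qed.

Lemma KK_mul m c (k : nat -> 'M[R]_m) n (w : nat -> 'M[R]_(m,c)) :
  KK k n *m \mxcol_(j < n) w j = \mxcol_(i < n) hm k (rs w) i.+1.
Proof.
rewrite /KK mul_mxblock_mxrow; apply: eq_mxcol => i.
transitivity (\sum_(j < n) (if (j < i.+1)%N then
   ('C(i.+1, j.+1))%:R *: (k (i - j)%N *m w j) else 0)).
  apply: eq_bigr => j _; rewrite ltnS.
  by case: (leqP j i) => hji; rewrite ?mul0mx // -scalemxAl.
rewrite (sum_if_lt (fun j : nat => ('C(i.+1, j.+1))%:R *: (k (i - j)%N *m w j))) //.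
rewrite hm_rev [RHS]big_ord_recl /= mulmx0 scaler0 add0r.
by apply: eq_bigr => j _; rewrite /bump /= add1n subSS.
Qed.

Lemma inj_unit n (T : 'M[R]_n) :
  (forall v : 'cV[R]_n, T *m v = 0 -> v = 0) -> T \in unitmx.
Proof.
move=> H; rewrite -unitmx_tr -row_free_unit -kermx_eq0; apply/eqP.
apply/row_matrixP => i; rewrite row0.
have h : row i (kermx T^T) *m T^T = 0 by rewrite -row_mul mulmx_ker row0.
have : T *m (row i (kermx T^T))^T = 0 by rewrite -(trmxK (T *m _)) trmx_mul trmxK h trmx0.
by move/H/(congr1 trmx); rewrite trmxK trmx0.
Qed.

Lemma lbt_unit m n (B : 'I_n -> 'I_n -> 'M[R]_m) (D : 'M[R]_m) :
  D \in unitmx -> (forall i j : 'I_n, (i < j)%N -> B i j = 0) ->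
  (forall i, B i i = D) -> \mxblock_(i, j) B i j \in unitmx.
Proof.
move=> uD Blt Bd; apply: inj_unit => v.
rewrite -(submxcolK v) mul_mxblock_mxrow => h.
have hi : forall i, \sum_j (B i j *m submxcol v j) = 0.
  move=> i; move/eqP: h; rewrite -mxcol0 => /eqP /(congr1 (fun M => submxcol M i)).
  by rewrite !mxcolK.
suff hall : forall k (i : 'I_n), (i < k)%N -> submxcol v i = 0.
  by apply/eqP; rewrite -mxcol0; apply/eqP/eq_mxcol => i; apply: (hall i.+1).
elim=> [//|k IH] i; rewrite ltnS leq_eqVlt => /orP[/eqP ik|]; last exact: IH.
have := hi i; rewrite (bigD1 i) //= big1 ?addr0.
  by rewrite Bd => /(congr1 (mulmx (invmx D))); rewrite mulKmx // mulmx0.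
move=> j /negbTE nji; case: (ltngtP i j) => hij.
- by rewrite Blt // mul0mx.
- by rewrite IH ?mulmx0 // -ik.
- by move: nji; rewrite (val_inj hij) eqxx.
Qed.

Lemma LL_unit m (l : nat -> 'M[R]_m) n : l 0%N \in unitmx -> LL l n \in unitmx.
Proof.
move=> u; apply: (lbt_unit u) => [i j hij|i]; first by rewrite leqNgt hij.
by rewrite leqnn subnn binn scale1r.
Qed.

Lemma KK_unit m (k : nat -> 'M[R]_m) n : k 0%N \in unitmx -> KK k n \in unitmx.
Proof.
move=> u; apply: (lbt_unit u) => [i j hij|i]; first by rewrite leqNgt hij.
by rewrite leqnn subnn binn scale1r.
Qed.


Lemma rank_unitLR r n (L : 'M[R]_r) (A : 'M[R]_(r,n)) (K : 'M[R]_n) :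
  L \in unitmx -> K \in unitmx -> \rank (L *m A *m K) = \rank A.
Proof.
move=> uL uK; rewrite mxrankMfree ?row_free_unit //.
by rewrite -mxrank_tr trmx_mul mxrankMfree ?row_free_unit ?unitmx_tr // mxrank_tr.
Qed.

Lemma rank_kernel r n a (A : 'M[R]_(r,n)) (P : 'M[R]_(a,n)) :
  (forall v : 'cV[R]_n, A *m v = 0 -> P *m v = 0 -> v = 0) ->
  (forall c : 'cV[R]_a, exists v, A *m v = 0 /\ P *m v = c) ->
  (\rank A + a)%N = n.
Proof.
move=> Hinj Hsurj.
set K := kermx A^T.
have rK : \rank K = (n - \rank A)%N by rewrite mxrank_ker mxrank_tr.
have cap0 : \rank (K :&: kermx P^T)%MS = 0%N.
  apply/eqP; rewrite mxrank_eq0; apply/eqP/row_matrixP => i; rewrite row0.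
  have hu : (row i (K :&: kermx P^T) <= K :&: kermx P^T)%MS by apply: row_sub.
  move: hu; rewrite sub_capmx => /andP[/sub_kermxP h1 /sub_kermxP h2].
  set u := row i _ in h1 h2 *.
  have e1 : A *m u^T = 0 by rewrite -(trmxK (A *m _)) trmx_mul trmxK h1 trmx0.
  have e2 : P *m u^T = 0 by rewrite -(trmxK (P *m _)) trmx_mul trmxK h2 trmx0.
  by have := Hinj _ e1 e2 => /(congr1 trmx); rewrite trmxK trmx0.
have := mxrank_mul_ker K P^T; rewrite cap0 addn0 => hKP.
have ra : \rank (K *m P^T) = a.
  apply/eqP; rewrite eqn_leq rank_leq_col /=.
  rewrite -{1}(mxrank1 R a) mxrankS //; apply/row_subP => i.
  have [v [hv1 hv2]] := Hsurj (row i 1%:M)^T.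
  have -> : row i (1%:M : 'M[R]_a) = v^T *m P^T by rewrite -trmx_mul hv2 trmxK.
  apply: submxMr; apply/sub_kermxP.
  by rewrite -trmx_mul hv1 trmx0.
have := rank_leq_col A; rewrite -hKP ra in rK; move: rK.
move=> h1 h2; rewrite h1 addnC subnK //.
Qed.


Definition lev {a : nat} (p : nat) (x : 'cV[R]_a) :=
  forall q : 'I_a, (a - p <= q)%N -> x q 0 = 0.

Definition supper {a : nat} (M : 'M[R]_a) :=
  forall i j : 'I_a, (j <= i)%N -> M i j = 0.

Lemma lev0 a (x : 'cV[R]_a) : lev 0 x.
Proof. by move=> q; rewrite subn0 leqNgt ltn_ord. Qed.

Lemma levZero a p : lev p (0 : 'cV[R]_a).
Proof. by move=> q _; rewrite mxE. Qed.

Lemma levD a p (x y : 'cV[R]_a) : lev p x -> lev p y -> lev p (x + y).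
Proof. by move=> hx hy q hq; rewrite mxE hx ?hy ?addr0. Qed.

Lemma levN a p (x : 'cV[R]_a) : lev p x -> lev p (- x).
Proof. by move=> hx q hq; rewrite mxE hx ?oppr0. Qed.

Lemma levZ a p (c : R) (x : 'cV[R]_a) : lev p x -> lev p (c *: x).
Proof. by move=> hx q hq; rewrite mxE hx ?mulr0. Qed.

Lemma lev_sum a p (I : finType) (F : I -> 'cV[R]_a) :
  (forall i, lev p (F i)) -> lev p (\sum_i F i).
Proof.
move=> h; apply: (big_ind (lev p)) => //; [exact: levZero|exact: levD].
Qed.

Lemma levW a p p' (x : 'cV[R]_a) : (p <= p')%N -> lev p' x -> lev p x.
Proof.
move=> hp hx q hq; apply: hx; apply: leq_trans hq; exact: leq_sub2l.
Qed.

Lemma lev_full a p (x : 'cV[R]_a) : (a <= p)%N -> lev p x -> x = 0.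
Proof.
move=> hp hx; apply/matrixP => q j; rewrite (ord1 j) mxE hx //.
by move: hp; rewrite -subn_eq0 => /eqP->.
Qed.

Lemma lev_mul a p (M : 'M[R]_a) (x : 'cV[R]_a) :
  supper M -> lev p x -> lev p.+1 (M *m x).
Proof.
move=> hM hx q hq; rewrite mxE big1 // => r _.
case: (leqP r q) => hrq; first by rewrite hM // mul0r.
rewrite hx ?mulr0 //; move: hq hrq; lia.
Qed.

Section ZLemma.
Variable a k : nat.
Variable N : nat -> 'M[R]_a.
Variable X0 : (nat -> 'cV[R]_a) -> nat -> 'cV[R]_a.
Hypothesis hak : (a <= k.+1)%N.
Hypothesis hN : forall j, supper (N j).
Hypothesis Xadd : forall u v j, X0 (fun i => u i + v i) j = X0 u j + X0 v j.
Hypothesis Xopp : forall u j, X0 (fun i => - u i) j = - X0 u j.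
Hypothesis Xlev : forall p u, (forall j, lev p (u j)) -> forall j, lev p.+1 (X0 u j).
Hypothesis Xsupp : forall s u, (forall j, (j < s)%N -> u j = 0) ->
  forall j, (j.+1 < s)%N -> X0 u j = 0.
Hypothesis Xcaus : forall u v, (forall j, (j <= k)%N -> u j = v j) ->
  forall j, (j < k)%N -> X0 u j = X0 v j.

Definition Yop (v : nat -> 'cV[R]_a) j := - (if (j < k)%N then X0 v j else 0).

Lemma X0zero j : X0 (fun _ => 0) j = 0.
Proof.
have := Xadd (fun _ => 0) (fun _ => 0) j.
have -> : (fun _ : nat => (0 : 'cV[R]_a) + 0) = (fun _ => 0).
  by apply: functional_extensionality => i; rewrite addr0.
move=> h; apply: (@addrI _ (X0 (fun _ => 0) j)); by rewrite -h addr0.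
Qed.

Lemma X0sum (I : Type) (r : seq I) (F : I -> nat -> 'cV[R]_a) j :
  X0 (fun i => \sum_(x <- r) F x i) j = \sum_(x <- r) X0 (F x) j.
Proof.
elim: r => [|x r IH].
  rewrite big_nil; transitivity (X0 (fun _ => 0) j); last exact: X0zero.
  by f_equal; apply: functional_extensionality => i; rewrite big_nil.
rewrite big_cons -IH -Xadd; f_equal.
by apply: functional_extensionality => i; rewrite big_cons.
Qed.

Lemma Yiter_lev p v : forall j, lev p (iter p Yop v j).
Proof.
elim: p => [|p IH] j /=; first exact: lev0.
rewrite /Yop; apply: levN; case: (j < k)%N; last exact: levZero.
exact: Xlev.
Qed.

Lemma Zinj z : (forall j, (j < k)%N -> z j + X0 z j = 0) -> z k = 0 ->
  forall j, (j <= k)%N -> z j = 0.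
Proof using hak hN Xadd Xopp Xlev Xsupp Xcaus.
move=> hz hk.
pose T := fun j => if (j <= k)%N then z j else 0.
have TY : T = Yop T.
  apply: functional_extensionality => j; rewrite /T /Yop.
  case: ltngtP => hjk.
  - rewrite -(@Xcaus z) //; last by move=> i hi; rewrite hi.
    by apply/eqP; rewrite -addr_eq0 hz.
  - by rewrite oppr0.
  - by rewrite oppr0 hjk hk.
have TI : forall n, T = iter n Yop T.
  by elim=> [//|n IH] /=; rewrite -IH.
move=> j hj; have := @Yiter_lev a T j; rewrite -TI => /lev_full.
by rewrite /T hj => ->.
Qed.

Definition ek (c : 'cV[R]_a) j := if j == k then c else 0.

Lemma Yiter_supp c i j : (j + i < k)%N -> iter i Yop (ek c) j = 0.
Proof.
elim: i j => [|i IH] j hji /=.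
  by rewrite /ek addn0 in hji *; rewrite (ltn_eqF hji).
rewrite /Yop; case: (j < k)%N; last by rewrite oppr0.
rewrite (@Xsupp (k - i)) ?oppr0 //.
  by move=> l hl; apply: IH; lia.
lia.
Qed.

Lemma Yadd u v j : Yop (fun i => u i + v i) j = Yop u j + Yop v j.
Proof. by rewrite /Yop; case: (j < k)%N; rewrite ?Xadd ?opprD // ?oppr0 ?addr0. Qed.

Lemma Yzero j : Yop (fun _ => 0) j = 0.
Proof. by rewrite /Yop X0zero; case: (j < k)%N; rewrite oppr0. Qed.

Lemma Ysum (I : Type) (r : seq I) (F : I -> nat -> 'cV[R]_a) j :
  Yop (fun i => \sum_(x <- r) F x i) j = \sum_(x <- r) Yop (F x) j.
Proof.
rewrite /Yop X0sum; case: (j < k)%N; first by rewrite sumrN.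
by rewrite oppr0 big1 // => x _; rewrite oppr0.
Qed.

Lemma tele_sum (g : nat -> 'cV[R]_a) n :
  \sum_(i < n) g i - \sum_(i < n) g i.+1 = g 0%N - g n.
Proof.
elim: n => [|n IH]; first by rewrite !big_ord0 subrr subrr.
rewrite !big_ord_recr /=.
rewrite opprD addrACA IH -addrA; congr (_ + _).
by rewrite addrA addNr add0r.
Qed.

Lemma Zsurj c : exists z, [/\ (forall j, (j < k)%N -> z j + X0 z j = 0),
  z k = c & N 0%N *m z 0%N = 0].
Proof using hak hN Xadd Xopp Xlev Xsupp Xcaus.
pose z := fun j => \sum_(i < a) iter i Yop (ek c) j.
have zY : forall j, z j - Yop z j = ek c j.
  move=> j; rewrite /z Ysum.
  have -> : \sum_(i < a) Yop (iter i Yop (ek c)) j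
    = \sum_(i < a) iter i.+1 Yop (ek c) j by [].
  rewrite (tele_sum (fun i => iter i Yop (ek c) j)) /=.
  by rewrite (lev_full (leqnn a) (@Yiter_lev a (ek c) j)) subr0.
exists z; split.
- move=> j hj; have := zY j; rewrite /Yop hj /ek (ltn_eqF hj) opprK //.
- by have := zY k; rewrite /Yop ltnn oppr0 subr0 /ek eqxx.
- rewrite /z mulmx_sumr big1 // => i _.
  case: (ltnP i k) => hik; first by rewrite Yiter_supp ?mulmx0.
  apply: (lev_full hak); apply: lev_mul => //.
  exact: (levW hik (@Yiter_lev i (ek c) 0%N)).
Qed.

Lemma Zker0 z : (forall j, (j < k)%N -> z j + X0 z j = 0) -> N 0%N *m z 0%N = 0.
Proof using hak hN Xadd Xopp Xlev Xsupp Xcaus.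
move=> hz; have [u [hu1 hu2 hu3]] := Zsurj (z k).
have hd := @Zinj (fun j => z j - u j).
have e0 : z 0%N - u 0%N = 0.
  apply: hd => //; last by rewrite hu2 subrr.
  move=> j hj.
  have -> : X0 (fun j => z j - u j) j = X0 z j - X0 u j by rewrite Xadd Xopp.
  by rewrite addrACA hz // -opprD hu1 // oppr0 addr0.
by move/eqP: e0; rewrite subr_eq0 => /eqP ->.
Qed.

End ZLemma.

Lemma sum_col_mx m1 m2 c (I : Type) (r : seq I) (A : I -> 'M[R]_(m1,c)) (B : I -> 'M[R]_(m2,c)) :
  \sum_(i <- r) col_mx (A i) (B i) = col_mx (\sum_(i <- r) A i) (\sum_(i <- r) B i).
Proof.
elim: r => [|x r IH]; first by rewrite !big_nil col_mx0.
by rewrite !big_cons IH add_col_mx.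
Qed.

Lemma hm_blk d a c (P : nat -> 'M[R]_d) (Q : nat -> 'M[R]_a) (x : nat -> 'M[R]_(d + a, c)) n :
  hm (fun j => block_mx (P j) 0 0 (Q j)) x n =
  col_mx (hm P (fun j => usubmx (x j)) n) (hm Q (fun j => dsubmx (x j)) n).
Proof.
rewrite /hm -sum_col_mx; apply: eq_bigr => j _.
rewrite -[x (n - j)%N]vsubmxK mul_block_col !mul0mx addr0 add0r scale_col_mx.
by rewrite col_mxKu col_mxKd.
Qed.

Lemma hmNr p q r (a : nat -> 'M[R]_(p,q)) (b : nat -> 'M[R]_(q,r)) n :
  hm a (fun i => - b i) n = - hm a b n.
Proof.
rewrite /hm -sumrN; apply: eq_bigr => j _; by rewrite mulmxN scalerN.
Qed.

Lemma hm_lev a p (N : nat -> 'M[R]_a) (u : nat -> 'cV[R]_a) n :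
  (forall l, supper (N l)) -> (forall j, lev p (u j)) -> lev p.+1 (hm N u n).
Proof.
move=> hN hu; apply: lev_sum => j; apply: levZ; exact: lev_mul.
Qed.

Lemma mxcol_seq m c n (v : 'M[R]_(\sum_(i < n.+1) m, c)) :
  v = \mxcol_(j < n.+1) (fun j : nat => submxcol v (inord j)) j.
Proof. by rewrite -{1}(submxcolK v); apply: eq_mxcol => j; rewrite inord_val. Qed.

Lemma mxcol_eq0 m c n (f : 'I_n -> 'M[R]_(m, c)) :
  \mxcol_(i < n) f i = 0 -> forall i, f i = 0.
Proof. by move=> h i; have := congr1 (fun M => submxcol M i) h; rewrite mxcolK -mxcol0 mxcolK. Qed.

Lemma mxcol_0 m c n (f : 'I_n -> 'M[R]_(m, c)) :
  (forall i, f i = 0) -> \mxcol_(i < n) f i = 0.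
Proof. by move=> h; rewrite -mxcol0; apply: eq_mxcol. Qed.

Lemma us_rs d a c (w : nat -> 'M[R]_(d + a, c)) :
  (fun j => usubmx (rs w j)) = rs (fun j => usubmx (w j)).
Proof. by apply: functional_extensionality => -[|j] //=; rewrite -(col_mx0) col_mxKu. Qed.

Lemma ds_rs d a c (w : nat -> 'M[R]_(d + a, c)) :
  (fun j => dsubmx (rs w j)) = rs (fun j => dsubmx (w j)).
Proof. by apply: functional_extensionality => -[|j] //=; rewrite -(col_mx0) col_mxKd. Qed.

Lemma dsub0 d a c : dsubmx (0 : 'M[R]_(d + a, c)) = 0.
Proof. by apply/matrixP => i j; rewrite !mxE. Qed.

Lemma usub0 d a c : usubmx (0 : 'M[R]_(d + a, c)) = 0.
Proof. by apply/matrixP => i j; rewrite !mxE. Qed.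

Definition wseq {m c n : nat} (V : 'M[R]_(\sum_(i < n) m, c)) (j : nat) : 'M[R]_(m, c) :=
  if @insub nat (fun x => (x < n)%N) 'I_n j is Some j' then submxcol V j' else 0.

Lemma wseqE m c n (V : 'M[R]_(\sum_(i < n) m, c)) (j : 'I_n) : wseq V j = submxcol V j.
Proof. by rewrite /wseq valK. Qed.

Lemma mxcol_wseq m c n (V : 'M[R]_(\sum_(i < n) m, c)) : \mxcol_(j < n) wseq V j = V.
Proof. by rewrite -{2}(submxcolK V); apply: eq_mxcol => j; rewrite wseqE. Qed.

Definition bF {m : nat} (f : nat -> 'M[R]_m) n := \mxcol_(i < n) f i.

Lemma bF_mul m c (e f : nat -> 'M[R]_m) n (z : 'M[R]_(m, c)) :
  bF f n *m z = \mxcol_(i < n) GG e f (dl z) i.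
Proof.
rewrite /bF mxcol_mul; apply: eq_mxcol => i.
rewrite /GG faddE hm_dlr.
have -> : sh (dl z) = fun _ => 0 by apply: functional_extensionality.
by rewrite hm0r add0r.
Qed.

Lemma GG_add m c (e f : nat -> 'M[R]_m) (u v : nat -> 'M[R]_(m, c)) n :
  GG e f (fadd u v) n = GG e f u n + GG e f v n.
Proof.
rewrite /GG !faddE.
have -> : sh (fadd u v) = fadd (sh u) (sh v) by [].
by rewrite !hmDr addrACA.
Qed.

Lemma GG_ext m c (e f : nat -> 'M[R]_m) (u v : nat -> 'M[R]_(m, c)) n :
  (forall j, (j <= n.+1)%N -> u j = v j) -> GG e f u n = GG e f v n.
Proof.
move=> h; rewrite /GG !faddE; congr (_ + _); apply: hm_ext => // j hj.
  by rewrite /sh h.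
by rewrite h //; apply: leq_trans hj _.
Qed.

Definition DDg {m : nat} (e f : nat -> 'M[R]_m) k :=
  block_mx (e 0%N) 0 (bF f k) (bE e f k).

Definition xseq {m c k : nat} (v : 'M[R]_(m + \sum_(i < k) m, c)) :=
  fadd (dl (usubmx v)) (rs (wseq (dsubmx v))).

Lemma DDg_mul m c (e f : nat -> 'M[R]_m) k (v : 'M[R]_(m + \sum_(i < k) m, c)) :
  DDg e f k *m v = col_mx (e 0%N *m xseq v 0%N) (\mxcol_(i < k) GG e f (xseq v) i).
Proof.
rewrite -{1}[v]vsubmxK /DDg mul_block_col mul0mx addr0.
rewrite (bF_mul e) -{1}(mxcol_wseq (dsubmx v)) (bE_mul _ _ _ (wseq (dsubmx v))).
rewrite -mxcolD /xseq faddE /= addr0; congr col_mx; apply: eq_mxcol => i.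
by rewrite GG_add.
Qed.

Section Canon.
Variable d a : nat.
Variable Oj : nat -> 'M[R]_d.
Variable Nj : nat -> 'M[R]_a.
Hypothesis hN : forall j, supper (Nj j).

Definition ce n : 'M[R]_(d + a) := block_mx (dl 1%:M n) 0 0 (Nj n).
Definition cf n : 'M[R]_(d + a) := block_mx (Oj n) 0 0 (dl 1%:M n).

Lemma GG_canon c (x : nat -> 'M[R]_(d + a, c)) n :
  GG ce cf x n = col_mx (usubmx (x n.+1) + hm Oj (fun j => usubmx (x j)) n)
     (hm Nj (fun j => dsubmx (x j.+1)) n + dsubmx (x n)).
Proof.
rewrite /GG faddE /ce /cf !hm_blk !hm_dll !mul1mx add_col_mx //.
Qed.

Lemma Yzero_ind (y : nat -> 'M[R]_(d,1)) K :
  (forall i, (i <= K)%N -> y i + hm Oj (rs y) i = 0) -> forall i, (i <= K)%N -> y i = 0.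
Proof.
move=> h; elim/ltn_ind => i IH hi.
have := h i hi; rewrite (@hm_ext _ _ _ Oj Oj _ (fun _ => 0)) ?hm0r ?addr0 //.
by case=> [//|j] hj; apply: IH; lia.
Qed.

Lemma Yzero_ind2 (y : nat -> 'M[R]_(d,1)) K : y 0%N = 0 ->
  (forall i, (i < K)%N -> y i.+1 + hm Oj y i = 0) -> forall i, (i <= K)%N -> y i = 0.
Proof.
move=> h0 h; elim/ltn_ind => i IH hi; case: i IH hi => [//|i] IH hi.
have := h i hi; rewrite (@hm_ext _ _ _ Oj Oj _ (fun _ => 0)) ?hm0r ?addr0 //.
by move=> j hj; apply: IH; lia.
Qed.

Definition X0E (z : nat -> 'cV[R]_a) := sh (hm Nj z).
Definition X0D (z : nat -> 'cV[R]_a) := hm Nj (sh z).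

Lemma XaddE u v j : X0E (fun i => u i + v i) j = X0E u j + X0E v j.
Proof. exact: hmDr. Qed.
Lemma XoppE u j : X0E (fun i => - u i) j = - X0E u j.
Proof. exact: hmNr. Qed.
Lemma XlevE p u : (forall j, lev p (u j)) -> forall j, lev p.+1 (X0E u j).
Proof. by move=> h j; apply: hm_lev. Qed.
Lemma XsuppE s u : (forall j, (j < s)%N -> u j = 0) ->
  forall j, (j.+1 < s)%N -> X0E u j = 0.
Proof.
move=> h j hj; rewrite /X0E /sh (@hm_ext _ _ _ Nj Nj _ (fun _ => 0)) ?hm0r //.
by move=> l hl; apply: h; lia.
Qed.
Lemma XcausE k u v : (forall j, (j <= k)%N -> u j = v j) ->
  forall j, (j < k)%N -> X0E u j = X0E v j.
Proof.
by move=> h j hj; rewrite /X0E /sh; apply: hm_ext => // l hl; apply: h; lia.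
Qed.

Lemma XaddD u v j : X0D (fun i => u i + v i) j = X0D u j + X0D v j.
Proof. exact: hmDr. Qed.
Lemma XoppD u j : X0D (fun i => - u i) j = - X0D u j.
Proof. exact: hmNr. Qed.
Lemma XlevD p u : (forall j, lev p (u j)) -> forall j, lev p.+1 (X0D u j).
Proof. by move=> h j; apply: hm_lev => // l; apply: h. Qed.
Lemma XsuppD s u : (forall j, (j < s)%N -> u j = 0) ->
  forall j, (j.+1 < s)%N -> X0D u j = 0.
Proof.
move=> h j hj; rewrite /X0D (@hm_ext _ _ _ Nj Nj _ (fun _ => 0)) ?hm0r //.
by move=> l hl; apply: h; lia.
Qed.
Lemma XcausD k u v : (forall j, (j <= k)%N -> u j = v j) ->
  forall j, (j < k)%N -> X0D u j = X0D v j.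
Proof.
by move=> h j hj; rewrite /X0D; apply: hm_ext => // l hl; rewrite /sh; apply: h; lia.
Qed.

Lemma rankE_canon k : (a <= k.+1)%N ->
  (\rank (bE ce cf k.+1) + a)%N = \sum_(i < k.+1) (d + a).
Proof.
move=> hak.
apply: (@rank_kernel _ _ _ _ (dsubmx (submxcol (1%:M) (@ord_max k)))).
- move=> v hA hP; move: hA; rewrite [X in _ *m X](mxcol_seq v) (bE_mul _ _ _ (fun j : nat => submxcol v (inord j))) => /mxcol_eq0 hG.
  move: hP; rewrite mul_dsub_mx submxcol_mul mul1mx => hP.
  set w := fun j : nat => submxcol v (inord j) in hG.
  have hG' : forall i, (i <= k)%N -> GG ce cf (rs w) i = 0.
    by move=> i hi; have := hG (inord i); rewrite inordK.
  have hy : forall i, (i <= k)%N -> usubmx (w i) = 0.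
    apply: (@Yzero_ind _ k) => i hi; have := hG' i hi.
    rewrite GG_canon us_rs => /eqP; rewrite col_mx_eq0 => /andP[/eqP -> _] //.
  have hz : forall i, (i <= k)%N -> dsubmx (w i) = 0.
    apply: (@Zinj a k Nj (X0E) hak hN XaddE XoppE XlevE XsuppE (@XcausE k) (fun i => dsubmx (w i))).
      move=> j hj; have := hG' j.+1 hj; rewrite GG_canon /=.
      by move=> /eqP; rewrite col_mx_eq0 => /andP[_ /eqP]; rewrite addrC.
    by rewrite /w -hP /=; congr (dsubmx (submxcol v _)); apply: val_inj; rewrite /= inordK.
  rewrite (mxcol_seq v); apply: mxcol_0 => i.
  rewrite -[submxcol v _]vsubmxK.
  have := hy i (leq_ord i); have := hz i (leq_ord i); rewrite /w => -> ->.
  exact: col_mx0.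
- move=> c; have [z [hz1 hz2 hz3]] := @Zsurj a k Nj (X0E) hak hN XaddE XoppE XlevE XsuppE (@XcausE k) c.
  exists (\mxcol_(j < k.+1) (fun j : nat => col_mx (0 : 'cV[R]_d) (z j)) j); split.
    rewrite (bE_mul _ _ _ (fun j : nat => col_mx (0 : 'cV[R]_d) (z j))); apply: mxcol_0 => i; rewrite GG_canon.
    apply/eqP; rewrite col_mx_eq0; apply/andP; split; apply/eqP.
      rewrite us_rs (@hm_ext _ _ _ Oj Oj _ (fun _ => 0)) ?hm0r ?addr0 ?col_mxKu //.
      by move=> j _; case: j => //= j; rewrite col_mxKu.
    rewrite /=.
    have -> : (fun j => dsubmx (col_mx (0 : 'cV[R]_d) (z j))) = z.
      by apply: functional_extensionality => j; rewrite col_mxKd.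
    case: i => -[|i] hi /=; first by rewrite hm0n hz3 dsub0 addr0.
    by rewrite col_mxKd addrC; apply: hz1.
  by rewrite mul_dsub_mx submxcol_mul mul1mx mxcolK /= col_mxKd.
Qed.

Lemma ce0_mul c (x : 'M[R]_(d + a, c)) : ce 0%N *m x = col_mx (usubmx x) (Nj 0%N *m dsubmx x).
Proof.
by rewrite -{1}[x]vsubmxK /ce mul_block_col /= mul1mx !mul0mx addr0 add0r.
Qed.

Lemma Dinj_seq k (x : nat -> 'cV[R]_(d + a)) : (a <= k.+1)%N ->
  ce 0%N *m x 0%N = 0 -> (forall i, (i < k)%N -> GG ce cf x i = 0) ->
  dsubmx (x k) = 0 -> forall i, (i <= k)%N -> x i = 0.
Proof.
move=> hak h0 hG hk.
have hy : forall i, (i <= k)%N -> usubmx (x i) = 0.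
  apply: (@Yzero_ind2 _ k).
    by move: h0; rewrite ce0_mul => /eqP; rewrite col_mx_eq0 => /andP[/eqP -> _].
  move=> i hi; have := hG i hi; rewrite GG_canon.
  by move/eqP; rewrite col_mx_eq0 => /andP[/eqP -> _].
have hz : forall i, (i <= k)%N -> dsubmx (x i) = 0.
  apply: (@Zinj a k Nj (X0D) hak hN XaddD XoppD XlevD XsuppD (@XcausD k) (fun i => dsubmx (x i))) => //.
  move=> j hj; have := hG j hj; rewrite GG_canon.
  by move/eqP; rewrite col_mx_eq0 => /andP[_ /eqP]; rewrite addrC.
move=> i hi; rewrite -[x i]vsubmxK hy // hz //; exact: col_mx0.
Qed.

Lemma Dsurj_seq k (c : 'cV[R]_a) : (a <= k.+1)%N ->
  exists x : nat -> 'cV[R]_(d + a), [/\ ce 0%N *m x 0%N = 0,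
    (forall i, (i < k)%N -> GG ce cf x i = 0) & dsubmx (x k) = c].
Proof.
move=> hak.
have [z [hz1 hz2 hz3]] := @Zsurj a k Nj (X0D) hak hN XaddD XoppD XlevD XsuppD (@XcausD k) c.
exists (fun j => col_mx (0 : 'cV[R]_d) (z j)); split.
- by rewrite ce0_mul col_mxKu col_mxKd hz3 col_mx0.
- move=> i hi; rewrite GG_canon; apply/eqP; rewrite col_mx_eq0; apply/andP; split; apply/eqP.
    rewrite col_mxKu add0r (@hm_ext _ _ _ Oj Oj _ (fun _ => 0)) ?hm0r //.
    by move=> j _; rewrite col_mxKu.
  have -> : (fun j => dsubmx (col_mx (0 : 'cV[R]_d) (z j.+1))) = sh z.
    by apply: functional_extensionality => j; rewrite col_mxKd.
  by rewrite col_mxKd addrC; apply: hz1.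
- by rewrite col_mxKd.
Qed.

Definition Sel k : 'M[R]_(d + a, \sum_(j < k) (d + a)) :=
  \mxrow_(j < k) (if (j == k.-1 :> nat) then 1%:M else 0).

Definition PD k : 'M[R]_(a, (d + a) + \sum_(j < k) (d + a)) :=
  row_mx (if k == 0%N then dsubmx (1%:M : 'M[R]_(d + a)) else 0) (dsubmx (Sel k)).

Lemma PD_mul k (v : 'cV[R]_((d + a) + \sum_(j < k) (d + a))) :
  PD k *m v = dsubmx (xseq v k).
Proof.
have hS : Sel k *m dsubmx v = \sum_(j < k) ((if (j == k.-1 :> nat) then 1%:M else 0) *m submxcol (dsubmx v) j).
  by rewrite /Sel -[X in _ *m X](submxcolK (dsubmx v)) mul_mxrow_mxcol.
rewrite -{1}[v]vsubmxK /PD mul_row_col mul_dsub_mx hS.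
case: k v hS => [|k] v hS.
  by rewrite (big_ord0 (0 : 'cV[R]_(d + a))) dsub0 addr0 mul_dsub_mx mul1mx /xseq faddE /= addr0.
rewrite mul0mx add0r /xseq faddE /= add0r (bigD1 ord_max) //= eqxx mul1mx.
have -> : \sum_(i < k.+1 | i != ord_max)
    ((if (i == k :> nat) then 1%:M else 0) *m submxcol (dsubmx v) i) = 0 :> 'cV[R]_(d + a).
  by apply: big1 => j /negbTE hj; rewrite -val_eqE /= in hj; rewrite hj mul0mx.
by rewrite addr0 -wseqE.
Qed.

Lemma rankD_canon k : (a <= k.+1)%N ->
  (\rank (DDg ce cf k) + a)%N = ((d + a) + \sum_(j < k) (d + a))%N.
Proof.
move=> hak; apply: (@rank_kernel _ _ _ _ (PD k)).
- move=> v; rewrite DDg_mul PD_mul => /eqP; rewrite col_mx_eq0 => /andP[/eqP h0 /eqP /mxcol_eq0 hG] hP.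
  have hG' : forall i, (i < k)%N -> GG ce cf (xseq v) i = 0.
    by move=> i hi; have := hG (Ordinal hi).
  have hx := Dinj_seq hak h0 hG' hP.
  rewrite -[v]vsubmxK; apply/eqP; rewrite col_mx_eq0; apply/andP; split; apply/eqP.
    by have := hx 0%N isT; rewrite /xseq faddE /= addr0.
  rewrite -(mxcol_wseq (dsubmx v)); apply: mxcol_0 => i.
  by have := hx i.+1 (ltn_ord i); rewrite /xseq faddE /= add0r.
- move=> c; have [x [h0 hG hk]] := Dsurj_seq c hak.
  exists (col_mx (x 0%N) (\mxcol_(j < k) x j.+1)).
  set v := col_mx _ _.
  have hxv : forall j, (j <= k)%N -> xseq v j = x j.
    case=> [|j] hj; rewrite /xseq faddE /= /v ?col_mxKu ?col_mxKd /= ?addr0 ?add0r //.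
    by rewrite (wseqE _ (Ordinal hj)) mxcolK.
  split.
    rewrite DDg_mul hxv // h0; apply/eqP; rewrite col_mx_eq0 eqxx /=; apply/eqP.
    apply: mxcol_0 => i; rewrite (@GG_ext _ _ _ _ _ x) ?hG //.
    by move=> j hj; apply: hxv; apply: leq_trans hj _.
  by rewrite PD_mul hxv.
Qed.

Lemma S_canon k (z : 'cV[R]_(d + a)) (W : 'cV[R]_(\sum_(i < k.+1) (d + a))) :
  (a <= k.+1)%N -> ce 0%N *m z = 0 -> bF cf k.+1 *m z = bE ce cf k.+1 *m W -> z = 0.
Proof.
move=> hak; rewrite ce0_mul => /eqP; rewrite col_mx_eq0 => /andP[/eqP hu _].
rewrite (bF_mul ce) -{1}(mxcol_wseq W) (bE_mul _ _ _ (wseq W)) => hE.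
set w := wseq W in hE.
have hE' : forall i, (i <= k)%N -> GG ce cf (dl z) i = GG ce cf (rs w) i.
  by move=> i hi; have := congr1 (fun M => submxcol M (@Ordinal k.+1 i hi)) hE; rewrite !mxcolK.
have hb : forall i, (i <= k)%N ->
    dsubmx (dl z i) = hm Nj (fun j => dsubmx (w j)) i + dsubmx (rs w i).
  move=> i hi; have := hE' i hi; rewrite !GG_canon => /eq_col_mx[_].
  have -> : (fun j => dsubmx (dl z j.+1)) = fun _ => 0.
    by apply: functional_extensionality => j; rewrite dsub0.
  by rewrite hm0r add0r.
have hN0 : Nj 0%N *m dsubmx (w 0%N) = 0.
  apply: (@Zker0 a k Nj (X0E) hak hN XaddE XoppE XlevE XsuppE (@XcausE k) (fun j => dsubmx (w j))).
  move=> j hj; have := hb j.+1 hj; rewrite /= dsub0 => h.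
  by rewrite addrC /X0E /sh -h.
have := hb 0%N isT; rewrite /= hm0n hN0 dsub0 addr0 => hd.
by rewrite -[z]vsubmxK hu hd col_mx0.
Qed.

End Canon.
End Hurwitz.

Section An.
Variable R : realType.
Variable I : set R.
Hypothesis hI : forall s, I s -> \forall y \near s, I y.

Definition jet {p q : nat} (M : R -> 'M[R]_(p,q)) (s : R) := fun n => mxder n M s.

Lemma loc_f (f g : R -> R) : (forall s, I s -> f s = g s) ->
  forall n s, I s -> derive1n n f s = derive1n n g s.
Proof.
move=> h; elim=> [|n IH] s hs; first exact: h.
rewrite !derive1nS !derive1E; apply: near_eq_derive.
by apply: filterS (hI hs) => y hy; exact: IH.
Qed.

Lemma loc_mx p q (M M' : R -> 'M[R]_(p,q)) : (forall s, I s -> M s = M' s) ->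
  forall n s, I s -> mxder n M s = mxder n M' s.
Proof.
move=> h n s hs; apply/matrixP => i j; rewrite !mxE; apply: loc_f => // x hx.
by rewrite h.
Qed.

Lemma smooth_ext (f g : R -> R) : (forall s, I s -> f s = g s) ->
  smooth_on I f -> smooth_on I g.
Proof.
move=> h hf n s hs; apply: (near_eq_derivable _ (hf n s hs)).
by apply: filterS (hI hs) => y hy; exact: loc_f.
Qed.

Lemma smooth_is_derive (f : R -> R) n s : smooth_on I f -> I s ->
  is_derive s 1 (derive1n n f) (derive1n n.+1 f s).
Proof.
move=> hf hs; have := derivableP (hf n s hs).
by rewrite -derive1E.
Qed.

Lemma mxder0 p q (M : R -> 'M[R]_(p,q)) s : mxder 0 M s = M s.
Proof. by apply/matrixP => i j; rewrite mxE. Qed.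

Lemma hm_entry p q r (a : nat -> 'M[R]_(p,q)) (b : nat -> 'M[R]_(q,r)) n i j :
  hm a b n i j = \sum_(l < n.+1) ('C(n, l))%:R * \sum_(k < q) (a l i k * b (n - l)%N k j).
Proof. by rewrite /hm summxE; apply: eq_bigr => l _; rewrite !mxE. Qed.

Lemma is_derive_sum' n (h : 'I_n -> R -> R) (dh : 'I_n -> R) (x : R) :
  (forall i, is_derive x 1 (h i) (dh i)) ->
  is_derive x 1 (fun y => \sum_(i < n) h i y) (\sum_(i < n) dh i).
Proof.
move=> hi; have := @is_derive_sum _ _ _ n h x 1 dh hi.
by rewrite (_ : \sum_(i < n) h i = (fun y => \sum_(i < n) h i y)) // ; apply/funext => y; rewrite fct_sumE.
Qed.

Lemma leib_step p q r (A : R -> 'M[R]_(p,q)) (B : R -> 'M[R]_(q,r)) :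
  smooth_mx I A -> smooth_mx I B -> forall n s, I s -> forall i j,
  is_derive s 1 (fun x => hm (jet A x) (jet B x) n i j) (hm (jet A s) (jet B s) n.+1 i j).
Proof.
move=> hA hB n s hs i j.
have -> : (fun x => hm (jet A x) (jet B x) n i j) = fun x =>
   \sum_(l < n.+1) ('C(n, l))%:R * \sum_(k < q)
     (derive1n l (fun y => A y i k) x * derive1n (n - l)%N (fun y => B y k j) x).
  by apply/funext => x; rewrite hm_entry; apply: eq_bigr => l _; congr (_ * _); apply: eq_bigr => k _; rewrite !mxE.
rewrite hm_sh mxE !hm_entry -big_split /=.
apply: is_derive_sum' => l; rewrite -mulrDr.
apply: is_deriveZ; rewrite -big_split /=.
apply: is_derive_sum' => k.
rewrite /sh /jet !mxE addrC.
have := is_deriveM (smooth_is_derive l (hA i k) hs) (smooth_is_derive (n - l)%N (hB k j) hs).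
move=> h; apply: (is_derive_eq h); rewrite /GRing.scale /=; rewrite [X in _ + X]mulrC //.
Qed.

Lemma leibniz p q r (A : R -> 'M[R]_(p,q)) (B : R -> 'M[R]_(q,r)) :
  smooth_mx I A -> smooth_mx I B ->
  (forall n s, I s -> mxder n (fun x => A x *m B x) s = hm (jet A s) (jet B s) n) /\
  smooth_mx I (fun x => A x *m B x).
Proof.
move=> hA hB.
have Q : forall n s, I s -> forall i j,
    derive1n n (fun x => (A x *m B x) i j) s = hm (jet A s) (jet B s) n i j.
  elim=> [|n IH] s hs i j.
    by rewrite hm0n /jet !mxder0.
  rewrite derive1nS derive1E.
  rewrite (@near_eq_derive _ _ _ _ (fun x => hm (jet A x) (jet B x) n i j)).
    by have h := leib_step hA hB n hs i j; rewrite derive_val.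
  by apply: filterS (hI hs) => y hy; exact: IH.
split.
  by move=> n s hs; apply/matrixP => i j; rewrite mxE Q.
move=> i j n s hs.
apply: (near_eq_derivable (f := fun x => hm (jet A x) (jet B x) n i j)).
  by apply: filterS (hI hs) => y hy; rewrite Q.
by have h := leib_step hA hB n hs i j; case: h.
Qed.

Lemma mxderD p q (A B : R -> 'M[R]_(p,q)) :
  smooth_mx I A -> smooth_mx I B ->
  (forall n s, I s -> mxder n (fun x => A x + B x) s = mxder n A s + mxder n B s) /\
  smooth_mx I (fun x => A x + B x).
Proof.
move=> hA hB.
have Q : forall n s, I s -> forall i j,
    derive1n n (fun x => (A x + B x) i j) s =
    derive1n n (fun x => A x i j) s + derive1n n (fun x => B x i j) s.
  elim=> [|n IH] s hs i j; first by rewrite /= mxE.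
  rewrite !derive1nS !derive1E.
  rewrite (@near_eq_derive _ _ _ _ (derive1n n (fun x => A x i j) + derive1n n (fun x => B x i j))).
    by rewrite deriveD //; [exact: hA|exact: hB].
  by apply: filterS (hI hs) => y hy; rewrite IH.
split.
  by move=> n s hs; apply/matrixP => i j; rewrite !mxE Q.
move=> i j n s hs.
apply: (near_eq_derivable (f := derive1n n (fun x => A x i j) + derive1n n (fun x => B x i j))).
  by apply: filterS (hI hs) => y hy; rewrite Q.
by apply: derivableD; [exact: hA|exact: hB].
Qed.

Lemma mxder_der p q (K : R -> 'M[R]_(p,q)) n s :
  mxder n (fun x => mxder 1 K x) s = mxder n.+1 K s.
Proof.
apply/matrixP => i j; rewrite !mxE.
have -> : (fun x => mxder 1 K x i j) = derive1n 1 (fun x => K x i j).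
  by apply/funext => x; rewrite mxE.
by rewrite -derive1Sn.
Qed.

Lemma smooth_der p q (K : R -> 'M[R]_(p,q)) :
  smooth_mx I K -> smooth_mx I (fun x => mxder 1 K x).
Proof.
move=> hK i j n s hs.
have -> : (fun x => mxder 1 K x i j) = derive1n 1 (fun x => K x i j).
  by apply/funext => x; rewrite mxE.
by rewrite -derive1Sn; apply: hK.
Qed.
End An.

Section Fin.
Variable R : realType.

Lemma mx_eq_col n p (A B : 'M[R]_(n,p)) : (forall v : 'cV[R]_p, A *m v = B *m v) -> A = B.
Proof.
move=> h; apply/matrixP => i j.
have := h (delta_mx j 0); rewrite -!colE => /(congr1 (fun M : 'cV[R]_n => M i 0)).
by rewrite !mxE.
Qed.

Lemma derive1n_cst0 n (c : R) : derive1n n.+1 (fun _ : R => c) = fun _ => 0.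
Proof.
elim: n => [|n IH]; first by apply/funext => s; rewrite derive1n1 derive1_cst.
by rewrite derive1nS IH; apply/funext => s; rewrite derive1_cst.
Qed.

Lemma mxder_cst p q (C : 'M[R]_(p,q)) n s : mxder n (fun _ => C) s = dl C n.
Proof.
apply/matrixP => i j; rewrite mxE; case: n => [|n] //=.
by rewrite -derive1nS derive1n_cst0 mxE.
Qed.

Lemma mxder_block d a (A : R -> 'M[R]_d) (B : R -> 'M[R]_(d,a)) (C : R -> 'M[R]_(a,d))
  (D : R -> 'M[R]_a) n s :
  mxder n (fun x => block_mx (A x) (B x) (C x) (D x)) s =
  block_mx (mxder n A s) (mxder n B s) (mxder n C s) (mxder n D s).
Proof.
apply/matrixP => i j; rewrite [LHS]mxE [RHS]mxE.
have -> : (fun x => block_mx (A x) (B x) (C x) (D x) i j) = fun x =>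
  match @fintype.split d a i with
  | inl i1 => match @fintype.split d a j with inl j1 => A x i1 j1 | inr j2 => B x i1 j2 end
  | inr i2 => match @fintype.split d a j with inl j1 => C x i2 j1 | inr j2 => D x i2 j2 end
  end.
  by apply/funext => x; rewrite !mxE; case: (@fintype.split d a i) => i1; rewrite ?mxE; case: (@fintype.split d a j) => j1; rewrite ?mxE.
by case: (@fintype.split d a i) => i1; rewrite ?mxE; case: (@fintype.split d a j) => j1; rewrite ?mxE.
Qed.


Lemma rs_sh m c (x : nat -> 'M[R]_(m,c)) : x 0%N = 0 -> rs (sh x) = x.
Proof. by move=> h0; apply/funext => -[|n] //=. Qed.

Lemma M1 m (l e f k : nat -> 'M[R]_m) n :
  bE (hm (hm l e) k) (fadd (hm (hm l f) k) (hm (hm l e) (sh k))) n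
  = LL l n *m bE e f n *m KK k n.
Proof.
apply: mx_eq_col => v; rewrite -(mxcol_wseq v).
set w := wseq v.
rewrite (bE_mul _ _ _ w) -!mulmxA (KK_mul _ _ w).
rewrite (bE_mul _ _ _ (sh (hm k (rs w)))).
rewrite (LL_mul _ _ (GG e f (rs (sh (hm k (rs w)))))).
apply: eq_mxcol => i; rewrite master rs_sh //.
by rewrite hm0n mulmx0.
Qed.

Lemma M2 m (l e f k : nat -> 'M[R]_m) n (zt : 'cV[R]_m) :
  bF (fadd (hm (hm l f) k) (hm (hm l e) (sh k))) n *m zt =
  LL l n *m (bF f n *m (k 0%N *m zt) + bE e f n *m \mxcol_(i < n) (k i.+1 *m zt)).
Proof.
rewrite (bF_mul (hm (hm l e) k)) (bF_mul e) (bE_mul _ _ _ (fun i => k i.+1 *m zt)).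
rewrite -mxcolD.
rewrite (_ : \mxcol_(i < n) (GG e f (dl (k 0%N *m zt)) i + GG e f (rs (fun i => k i.+1 *m zt)) i)
   = \mxcol_(i < n) GG e f (fadd (dl (k 0%N *m zt)) (rs (fun i => k i.+1 *m zt))) i); last first.
  by apply: eq_mxcol => i; rewrite GG_add.
rewrite LL_mul; apply: eq_mxcol => i; rewrite master.
have -> : hm k (dl zt) = fadd (dl (k 0%N *m zt)) (rs (fun i => k i.+1 *m zt)).
  by apply/funext => -[|j]; rewrite hm_dlr faddE /= ?addr0 ?add0r.
by [].
Qed.

Lemma xseq_col m (X : nat -> 'cV[R]_m) n j : (j <= n)%N ->
  xseq (col_mx (X 0%N) (\mxcol_(i < n) X i.+1)) j = X j.
Proof.
case: j => [|j] hj; rewrite /xseq faddE /= ?col_mxKu ?col_mxKd /= ?addr0 ?add0r //.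
by rewrite (wseqE _ (Ordinal hj)) mxcolK.
Qed.

Definition QQ m (k : nat -> 'M[R]_m) n := block_mx (k 0%N) 0 (bF (sh k) n) (KK k n).

Lemma QQ_mul m (k : nat -> 'M[R]_m) n (v : 'cV[R]_(m + \sum_(i < n) m)) :
  QQ k n *m v = col_mx (hm k (xseq v) 0%N) (\mxcol_(i < n) hm k (xseq v) i.+1).
Proof.
rewrite -{1}[v]vsubmxK /QQ mul_block_col mul0mx addr0 hm0n /xseq faddE /= addr0.
congr col_mx.
rewrite /bF mxcol_mul -{1}(mxcol_wseq (dsubmx v)) KK_mul -mxcolD.
by apply: eq_mxcol => i; rewrite hmDr hm_dlr.
Qed.

Lemma M3 m (l e f k : nat -> 'M[R]_m) n :
  DDg (hm (hm l e) k) (fadd (hm (hm l f) k) (hm (hm l e) (sh k))) n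
  = block_mx (l 0%N) 0 0 (LL l n) *m DDg e f n *m QQ k n.
Proof.
apply: mx_eq_col => v.
rewrite -!mulmxA QQ_mul DDg_mul DDg_mul.
set X := hm k (xseq v).
rewrite xseq_col // mul_block_col !mul0mx addr0 add0r.
rewrite (_ : \mxcol_(i < n) GG e f (xseq (col_mx (X 0%N) (\mxcol_(i0 < n) X i0.+1))) i
   = \mxcol_(i < n) GG e f X i); last first.
  apply: eq_mxcol => i; apply: GG_ext => j hj; apply: xseq_col.
  by apply: leq_trans hj _.
rewrite LL_mul; congr col_mx.
  by rewrite /X !hm0n !mulmxA.
f_equal; apply/funext => i; exact: master.
Qed.


Lemma dl0 p q n : dl (0 : 'M[R]_(p,q)) n = 0.
Proof. by case: n. Qed.

Section Main.
Variable I : set R.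
Hypothesis hI : forall s, I s -> \forall y \near s, I y.
Variables d a : nat.
Variables E F L K : R -> 'M[R]_(d + a).
Variable Om : R -> 'M[R]_d.
Variable N : R -> 'M[R]_a.
Hypotheses (hE : smooth_mx I E) (hF : smooth_mx I F) (hL : smooth_mx I L) (hK : smooth_mx I K).
Hypothesis hN : forall s, I s -> strictly_upper (N s).
Hypothesis heq : forall s, I s ->
  block_mx 1%:M 0 0 (N s) = L s *m E s *m K s /\
  block_mx (Om s) 0 0 1%:M = L s *m F s *m K s + L s *m E s *m mxder 1 K s.
Hypothesis uL : forall s, I s -> L s \in unitmx.
Hypothesis uK : forall s, I s -> K s \in unitmx.
Variable t : R.
Hypothesis ht : I t.

Let Et := fun s => block_mx 1%:M 0 0 (N s) : 'M[R]_(d + a).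
Let Ft := fun s => block_mx (Om s) 0 0 1%:M : 'M[R]_(d + a).

Lemma jet_mul p q r (A : R -> 'M[R]_(p,q)) (B : R -> 'M[R]_(q,r)) :
  smooth_mx I A -> smooth_mx I B ->
  jet (fun x => A x *m B x) t = hm (jet A t) (jet B t).
Proof.
by move=> hA hB; apply/funext => n; rewrite /jet (leibniz hI hA hB).1.
Qed.

Lemma jEt : jet Et t = hm (hm (jet L t) (jet E t)) (jet K t).
Proof.
have sLE := (leibniz hI hL hE).2.
apply/funext => n; rewrite /jet (@loc_mx _ _ hI _ _ _ (fun x => L x *m E x *m K x)) //.
  by rewrite (leibniz hI sLE hK).1 // (jet_mul hL hE).
by move=> s hs; rewrite /Et (heq hs).1.
Qed.

Lemma jFt : jet Ft t = fadd (hm (hm (jet L t) (jet F t)) (jet K t))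
                          (hm (hm (jet L t) (jet E t)) (sh (jet K t))).
Proof.
have sLE := (leibniz hI hL hE).2.
have sLF := (leibniz hI hL hF).2.
have sK' := smooth_der hK.
have s1 := (leibniz hI sLF hK).2.
have s2 := (leibniz hI sLE sK').2.
apply/funext => n; rewrite /jet (@loc_mx _ _ hI _ _ _
   (fun x => L x *m F x *m K x + L x *m E x *m mxder 1 K x)) //; last first.
  by move=> s hs; rewrite /Ft (heq hs).2.
rewrite (mxderD hI s1 s2).1 // faddE.
rewrite (leibniz hI sLF hK).1 // (leibniz hI sLE sK').1 //.
rewrite (jet_mul hL hF) (jet_mul hL hE); congr (_ + _); congr hm.
by apply/funext => j; rewrite /jet mxder_der.
Qed.

Lemma supN j : supper (jet N t j).
Proof.
move=> p q hpq; rewrite /jet mxE.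
rewrite (@loc_f _ _ hI _ (fun _ => 0)) //; last by move=> s hs; rewrite (hN hs).
by case: j => [|j] //; rewrite derive1n_cst0.
Qed.

Lemma jEt_c : jet Et t = ce d (jet N t).
Proof.
apply/funext => n; rewrite /jet /Et.
rewrite (mxder_block (fun _ => 1%:M) (fun _ => 0) (fun _ => 0) N n t).
by rewrite !mxder_cst !dl0.
Qed.

Lemma jFt_c : jet Ft t = cf a (jet Om t).
Proof.
apply/funext => n; rewrite /jet /Ft.
rewrite (mxder_block Om (fun _ => 0) (fun _ => 0) (fun _ => 1%:M) n t).
by rewrite !mxder_cst !dl0.
Qed.

Lemma sumc (k c : nat) : (\sum_(i < k) c)%R = (k * c)%N.
Proof. by rewrite sumr_const card_ord -mulr_natr natn mulnC. Qed.

Lemma rankEk k : (a <= k.+1)%N -> \rank (Ek E F k t) = (k * (d + a) + d)%N.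
Proof.
move=> hak.
have -> : Ek E F k t = bE (jet E t) (jet F t) k.+1 by [].
rewrite -(@rank_unitLR R _ _ (LL (jet L t) k.+1) _ (KK (jet K t) k.+1)); last 2 first.
- by apply: LL_unit; rewrite /jet mxder0; apply: uL.
- by apply: KK_unit; rewrite /jet mxder0; apply: uK.
rewrite -M1 -jEt -jFt jEt_c jFt_c.
have h := rankE_canon (jet Om t) supN hak.
have h2 : (\rank (bE (ce d (jet N t)) (cf a (jet Om t)) k.+1) + a)%N = (k.+1 * (d + a))%N by rewrite h sumc.
move: h2; clear h.
nia.
Qed.

Lemma blk_unit m1 m2 (A : 'M[R]_m1) (B : 'M[R]_(m2, m1)) (D : 'M[R]_m2) :
  A \in unitmx -> D \in unitmx -> block_mx A 0 B D \in unitmx.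
Proof. by rewrite !unitmxE det_lblock unitrM => -> ->. Qed.

Lemma rankDk k : (a <= k.+1)%N -> \rank (Dk E F k t) = (k * (d + a) + d)%N.
Proof.
move=> hak.
have -> : Dk E F k t = DDg (jet E t) (jet F t) k by rewrite /Dk /DDg /jet mxder0.
rewrite -(@rank_unitLR R _ _ (block_mx (jet L t 0%N) 0 0 (LL (jet L t) k)) _ (QQ (jet K t) k)); last 2 first.
- apply: blk_unit; first by rewrite /jet mxder0; apply: uL.
  by apply: LL_unit; rewrite /jet mxder0; apply: uL.
- apply: blk_unit; first by rewrite /jet mxder0; apply: uK.
  by apply: KK_unit; rewrite /jet mxder0; apply: uK.
rewrite -M3 -jEt -jFt jEt_c jFt_c.
have h := rankD_canon (jet Om t) supN hak.
have h2 : (\rank (DDg (ce d (jet N t)) (cf a (jet Om t)) k) + a)%N = (k.+1 * (d + a))%N.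
  by rewrite h sumc; lia.
move: h2; clear h; nia.
Qed.

Lemma Skz k : (a <= k.+1)%N -> forall z : 'cV[R]_(d + a),
  E t *m z = 0 -> Sk E F k t z -> z = 0.
Proof.
move=> hak z hz [w hw].
have uKt := uK ht.
set zt := invmx (K t) *m z.
have hK0 : jet K t 0%N = K t by rewrite /jet mxder0.
have c1 : ce d (jet N t) 0%N *m zt = 0.
  rewrite -jEt_c /jet mxder0 /Et (heq ht).1 /zt.
  by rewrite !mulmxA mulmxK // -mulmxA hz mulmx0.
set C := \mxcol_(i < k.+1) (jet K t i.+1 *m zt).
have c2 : bF (cf a (jet Om t)) k.+1 *m zt = bE (ce d (jet N t)) (cf a (jet Om t)) k.+1 *m
    (invmx (KK (jet K t) k.+1) *m (w + C)).
  have hKz : K t *m zt = z by rewrite /zt mulKVmx.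
  rewrite -jEt_c -jFt_c jEt jFt M2 M1 hK0 hKz.
  have -> : bF (jet F t) k.+1 *m z = bE (jet E t) (jet F t) k.+1 *m w by exact: hw.
  rewrite -mulmxDr [RHS]mulmxA mulmxK ?mulmxA //.
  by apply: KK_unit; rewrite hK0.
have := S_canon supN hak c1 c2 => /(congr1 (mulmx (K t))).
by rewrite /zt mulKVmx // mulmx0.
Qed.

End Main.
End Fin.

Local Open Scope classical_set_scope.

Theorem theoremt (R : realType) (t0 tf : R) (d a : nat)
  (E F : R -> 'M[R]_(d + a)) (Om : R -> 'M[R]_d) (N : R -> 'M[R]_a) :
  t0 < tf ->
  smooth_mx `]t0, tf[ E -> smooth_mx `]t0, tf[ F ->
  (forall t, `]t0, tf[ t -> strictly_upper (N t)) ->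
  pair_equiv `]t0, tf[ E F
    (fun t => block_mx 1%:M 0 0 (N t)) (fun t => block_mx (Om t) 0 0 1%:M) ->
  (forall t, `]t0, tf[ t -> forall k : nat, (a.-1 <= k)%N ->
      \rank (Ek E F k t) = (k * (d + a) + d)%N /\
      \rank (Dk E F k t) = (k * (d + a) + d)%N) /\
  (forall t, `]t0, tf[ t -> forall k : nat, (a <= k)%N ->
      forall z : 'cV[R]_(d + a), E t *m z = 0 -> Sk E F k t z -> z = 0).
Proof.
move=> _ hE hF hN [L [K [hL hK uL uK heq]]].
have hI : forall s, `]t0, tf[ s -> \forall y \near s, `]t0, tf[ y.
  by move=> s hs; exact: near_in_itvoo.
split.
- move=> t ht k hk; have hak : (a <= k.+1)%N by lia.
  split.
    by apply: (rankEk (L := L) (K := K) (Om := Om) (N := N) hI).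
  by apply: (rankDk (L := L) (K := K) (Om := Om) (N := N) hI).
- move=> t ht k hk z hz hS; have hak : (a <= k.+1)%N by lia.
  by apply: (Skz (L := L) (K := K) (Om := Om) (N := N) hI) hS.
Qed.
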